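(* Let $f:\mathbb{R}^{M}\times\Theta\to\mathbb{R}^N$ (with $N\ge1$) be a network built from $L$ linear layers as follows: $\mathbf{x}^1=\mathbf{x}$, $\mathbf{x}^{l+1}=\sigma_l(\mathbf{W}_l\mathbf{x}^l;\boldsymbol{\beta}_l)$ for $l=1,\dots,L-1$, and $f(\mathbf{x};\boldsymbol{\theta})=\sigma_L(\mathbf{W}_L\mathbf{x}^L;\boldsymbol{\beta}_L)$, where $\mathbf{W}_l$ are weight matrices, $\sigma_l$ are differentiable maps possibly with extra parameters $\boldsymbol{\beta}_l$, and $\boldsymbol{\theta}=(\mathbf{W}_1,\boldsymbol{\beta}_1,\dots,\mathbf{W}_L,\boldsymbol{\beta}_L)$; $f$ is assumed twice differentiable in $\boldsymbol{\theta}$. For each $l$ let $f^l$ denote the map from the input $\mathbf{x}^l$ of the $l$-th linear layer to the network output (with parameters fixed). Let $(\mathbf{x}_i,\mathbf{y}_i)_{i=1}^n$ be training data, let $\mathbf{x}_i^l$ be the input to the $l$-th linear layer when the network input is $\mathbf{x}_i$, and assume all $\mathbf{x}_i^l\ne0$. Let $\boldsymbol{\theta}^*$ be an exact interpolation solution ($f(\mathbf{x}_i;\boldsymbol{\theta}^* )=\mathbf{y}_i$ for all $i$). Then $$\sum_{l=1}^L dV_{f^l}\le \frac{N^{-N/2}}{n}\sum_{l=1}^L\sum_{i=1}^n\|J_{f^l}(\mathbf{x}_i^l)\|_F^N\le \frac1n\sqrt{\sum_{l=1}^L\sum_{i=1}^n\frac{\|\mathbf{W}_l\|_2^{2N}}{\|\mathbf{x}_i^l\|_2^{2N}}}\cdot\left(\frac{n\,S(\boldsymbol{\theta}^*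 )}{N}\right)^{N/2}.$$
   Context: The loss is $L(\boldsymbol{\theta})=\frac1n\sum_{i=1}^n\frac12\|f(\mathbf{x}_i;\boldsymbol{\theta})-\mathbf{y}_i\|_2^2$ and the sharpness is $S(\boldsymbol{\theta})=\operatorname{Tr}(\nabla^2_{\boldsymbol{\theta}}L(\boldsymbol{\theta}))$. $J_{f^l}(\mathbf{x}^l)$ is the Jacobian ($N$ rows) of $f^l$ at $\mathbf{x}^l$ with parameters $\boldsymbol{\theta}^*$. The local volumetric ratio of $f^l$ at $\mathbf{x}^l$ is $\sqrt{\det(J_{f^l}(\mathbf{x}^l)J_{f^l}(\mathbf{x}^l)^T)}$, and $dV_{f^l}=\frac1n\sum_{i=1}^n\sqrt{\det(J_{f^l}(\mathbf{x}_i^l)J_{f^l}(\mathbf{x}_i^l)^T)}$; the sum $\sum_l dV_{f^l}$ is the Network Volumetric Ratio. $\|\cdot\|_2$ is the Euclidean/spectral norm and $\|\cdot\|_F$ the Frobenius norm. *)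

(* Defs.v *)
From HB Require Import structures.
From mathcomp Require Import all_boot all_order all_algebra.
From mathcomp Require Import all_classical all_reals all_analysis.
Import Order.TTheory GRing.Theory Num.Theory numFieldNormedType.Exports.
Local Open Scope ring_scope.
Local Open Scope classical_set_scope.

(* Layer l (0-indexed, l = 0 .. L-1, paper's layer l+1):
     input  x^l : 'cV_(d l)     (d 0 = M, d L = N)
     weight W l : 'M_(e l, d l)
     extra parameters  B l : 'cV_(p l)
     activation  sigma l : 'cV_(e l) -> 'cV_(p l) -> 'cV_(d l.+1)
   x^{l+1} = sigma l (W l *m x^l) (B l). *)

Section Network.
Context {R : realType} (d e p : nat -> nat)
  (sigma : forall l, 'cV[R]_(e l) -> 'cV[R]_(p l) -> 'cV[R]_(d l.+1)).

Definition layer (W : forall l, 'M[R]_(e l, d l)) (B : forall l, 'cV[R]_(p l))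
  (l : nat) (x : 'cV[R]_(d l)) : 'cV[R]_(d l.+1) :=
  sigma l (W l *m x) (B l).

Fixpoint fwd W B (l : nat) : 'cV[R]_(d 0) -> 'cV[R]_(d l) :=
  match l return 'cV[R]_(d 0) -> 'cV[R]_(d l) with
  | 0 => fun x => x
  | l'.+1 => fun x => layer W B l' (fwd W B l' x)
  end.

Fixpoint run W B (k l : nat) : 'cV[R]_(d l) -> 'cV[R]_(d (k + l)) :=
  match k return 'cV[R]_(d l) -> 'cV[R]_(d (k + l)) with
  | 0 => fun x => x
  | k'.+1 => fun x => layer W B (k' + l) (run W B k' l x)
  end.

(* f^l : map from the input x^l of layer l to the network output
   (output space 'cV_(d (L - l + l)) = 'cV_(d L) = R^N for l <= L) *)
Definition fl W B (L l : nat) : 'cV[R]_(d l) -> 'cV[R]_(d (L - l + l)) :=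
  run W B (L - l) l.

Definition net W B (L : nat) : 'cV[R]_(d 0) -> 'cV[R]_(d L) := fwd W B L.

Definition sqnorm2 {m : nat} (v : 'cV[R]_m) : R := \sum_(i < m) (v i 0) ^+ 2.

Definition loss (L n : nat) (X : 'I_n -> 'cV[R]_(d 0)) (Y : 'I_n -> 'cV[R]_(d L))
  W B : R :=
  n%:R^-1 * \sum_(i < n) 2^-1 * sqnorm2 (net W B L (X i) - Y i).

Definition Wpert (W : forall l, 'M[R]_(e l, d l)) (l0 i0 j0 : nat) (t : R) :
  forall l, 'M[R]_(e l, d l) :=
  fun l => \matrix_(i, j) (W l i j +
     (if [&& l == l0, (i : nat) == i0 & (j : nat) == j0] then t else 0)).

Definition Bpert (B : forall l, 'cV[R]_(p l)) (l0 k0 : nat) (t : R) :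
  forall l, 'cV[R]_(p l) :=
  fun l => \col_k (B l k 0 +
     (if (l == l0) && ((k : nat) == k0) then t else 0)).

Definition d2 (phi : R -> R) (t : R) : R := derive1 (derive1 phi) t.

(* sharpness S(theta) = Tr (Hessian of the loss w.r.t. theta)
   = sum over all coordinates theta_k of d^2/dt^2 L(theta + t e_k) |_{t=0} *)
Definition sharpness (L n : nat) X Y W B : R :=
  \sum_(l < L)
    ((\sum_(i < e l) \sum_(j < d l)
        d2 (fun t => loss L n X Y (Wpert W l i j t) B) 0)
     + \sum_(k < p l) d2 (fun t => loss L n X Y W (Bpert B l k t)) 0).

End Network.

Definition jac {R : realType} {m q : nat} (g : 'cV[R]_m -> 'cV[R]_q)
  (x : 'cV[R]_m) : 'M[R]_(q, m) :=
  \matrix_(i, j) ('d g x (delta_mx j 0) : 'cV[R]_q) i 0.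

Definition volratio {R : realType} {m q : nat} (g : 'cV[R]_m -> 'cV[R]_q)
  (x : 'cV[R]_m) : R :=
  Num.sqrt (\det (jac g x *m (jac g x)^T)).

Definition norm2 {R : realType} {m : nat} (v : 'cV[R]_m) : R :=
  Num.sqrt (\sum_(i < m) (v i 0) ^+ 2).

Definition frob {R : realType} {m q : nat} (A : 'M[R]_(q, m)) : R :=
  Num.sqrt (\sum_(i < q) \sum_(j < m) (A i j) ^+ 2).

Definition specnorm {R : realType} {m q : nat} (A : 'M[R]_(q, m)) : R :=
  sup [set norm2 (A *m v) | v in [set v : 'cV[R]_m | norm2 v <= 1]].

(* Main.v *)
Require Import Defs.
From HB Require Import structures.
From mathcomp Require Import all_boot all_order all_algebra.
From mathcomp Require Import all_classical all_reals all_analysis.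
From mathcomp Require Import ring lra zify.
Import Order.TTheory GRing.Theory Num.Theory numFieldNormedType.Exports.
Local Open Scope ring_scope.

Section Spec.
Local Open Scope classical_set_scope.
Set Implicit Arguments.
Context {R : realType}.

Lemma lerT {x y z : R} : x <= y -> y <= z -> x <= z.
Proof. exact: le_trans. Qed.

Lemma cauchy_schwarz (I : finType) (u v : I -> R) :
  (\sum_i u i * v i) ^+ 2 <= (\sum_i u i ^+ 2) * (\sum_i v i ^+ 2).
Proof.
pose F := \sum_i \sum_j (u i ^+ 2 * v j ^+ 2 - u i * v i * (u j * v j)).
have e1 : \sum_i \sum_j (u i * v j - u j * v i) ^+ 2 = F + F.
  have -> : F + F = F + \sum_j \sum_i (u i ^+ 2 * v j ^+ 2 - u i * v i * (u j * v j)).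
    by rewrite exchange_big.
  rewrite /F -big_split; apply: eq_bigr => i _; rewrite -big_split; apply: eq_bigr => j _ /=; ring.
have eF : F = (\sum_i u i ^+ 2) * (\sum_i v i ^+ 2) - (\sum_i u i * v i) ^+ 2.
  rewrite /F expr2 !big_distrlr /= -sumrB; apply: eq_bigr => i _; rewrite -sumrB.
  by apply: eq_bigr => j _.
have : 0 <= F + F.
  by rewrite -e1; apply: sumr_ge0 => i _; apply: sumr_ge0 => j _; exact: sqr_ge0.
rewrite eF; lra.
Qed.

Lemma cs_sqrt (I : finType) (u v : I -> R) :
  \sum_i u i * v i <= Num.sqrt (\sum_i u i ^+ 2) * Num.sqrt (\sum_i v i ^+ 2).
Proof.
rewrite -sqrtrM; last by apply: sumr_ge0 => i _; exact: sqr_ge0.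
apply: (le_trans (ler_norm _)); rewrite -sqrtr_sqr ler_sqrt ?cauchy_schwarz //.
by apply: mulr_ge0; apply: sumr_ge0 => i _; exact: sqr_ge0.
Qed.

Lemma norm2_ge0 m (v : 'cV[R]_m) : 0 <= norm2 v.
Proof. exact: sqrtr_ge0. Qed.

Lemma norm2_sq m (v : 'cV[R]_m) : norm2 v ^+ 2 = \sum_i v i 0 ^+ 2.
Proof. by rewrite sqr_sqrtr //; apply: sumr_ge0 => i _; exact: sqr_ge0. Qed.

Lemma norm2Z m c (v : 'cV[R]_m) : norm2 (c *: v) = `|c| * norm2 v.
Proof.
rewrite /norm2 -sqrtr_sqr -sqrtrM ?sqr_ge0 // mulr_sumr.
by congr Num.sqrt; apply: eq_bigr => i _; rewrite mxE exprMn.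
Qed.

Lemma norm2_eq0 m (v : 'cV[R]_m) : norm2 v = 0 -> v = 0.
Proof.
move=> /eqP; rewrite sqrtr_eq0 => H.
have S0 : \sum_i v i 0 ^+ 2 = 0.
  by apply/eqP; rewrite eq_le H; apply: sumr_ge0 => i _; exact: sqr_ge0.
apply/matrixP => i j; rewrite ord1 mxE.
have H2 : forall i, v i 0 ^+ 2 = 0.
  by move=> i0; exact: (psumr_eq0P (fun i _ => sqr_ge0 (v i 0)) S0).
by move/eqP: (H2 i); rewrite sqrf_eq0 => /eqP.
Qed.

Lemma norm2_mul_frob q m (A : 'M[R]_(q, m)) v : norm2 (A *m v) <= frob A * norm2 v.
Proof.
rewrite /norm2 /frob -sqrtrM; last by apply: sumr_ge0 => i _; apply: sumr_ge0 => j _; exact: sqr_ge0.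
rewrite ler_sqrt; last by apply: mulr_ge0; apply: sumr_ge0 => i _; try apply: sumr_ge0 => j _; exact: sqr_ge0.
rewrite mulr_suml; apply: ler_sum => i _; rewrite mxE.
exact: cauchy_schwarz (fun j => A i j) (fun j => v j 0).
Qed.

Lemma specnorm_has_sup q m (A : 'M[R]_(q, m)) :
  has_sup [set norm2 (A *m v) | v in [set v : 'cV[R]_m | norm2 v <= 1]].
Proof.
split.
  exists (norm2 (A *m 0)), 0 => //=.
  by rewrite /norm2 big1 ?sqrtr0 // => i _; rewrite mxE expr0n.
exists (frob A) => _ [v /= v1 <-].
apply: (@le_trans _ _ (frob A * norm2 v)); first exact: norm2_mul_frob.
rewrite -[X in _ <= X]mulr1; exact: (ler_wpM2l (sqrtr_ge0 _) v1).
Qed.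

Lemma specnorm_ge0 q m (A : 'M[R]_(q, m)) : 0 <= specnorm A.
Proof.
have := sup_upper_bound (specnorm_has_sup A); apply.
exists 0 => /=; last by rewrite mulmx0 /norm2 big1 ?sqrtr0 // => i _; rewrite mxE expr0n.
by rewrite /norm2 big1 ?sqrtr0 // => i _; rewrite mxE expr0n.
Qed.

Lemma specnorm_le q m (A : 'M[R]_(q, m)) v : norm2 (A *m v) <= specnorm A * norm2 v.
Proof.
have [v0|vn0] := eqVneq (norm2 v) 0.
  by rewrite v0 mulr0 (norm2_eq0 v v0) mulmx0 /norm2 big1 ?sqrtr0 // => i _; rewrite mxE expr0n.
have vp : 0 < norm2 v by rewrite lt_neqAle eq_sym vn0 norm2_ge0.
have H : norm2 (A *m ((norm2 v)^-1 *: v)) <= specnorm A.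
  apply: (sup_upper_bound (specnorm_has_sup A)).
  exists ((norm2 v)^-1 *: v) => //=.
  by rewrite norm2Z ger0_norm ?invr_ge0 ?norm2_ge0 // mulVf.
move: H.
by rewrite -scalemxAr norm2Z ger0_norm ?invr_ge0 ?norm2_ge0 // ler_pdivrMl // mulrC.
Qed.


Lemma specnorm_tr_le a b (W : 'M[R]_(a, b)) (u : 'cV[R]_a) :
  norm2 (W^T *m u) <= specnorm W * norm2 u.
Proof.
set y := W^T *m u.
have s0 := specnorm_ge0 W.
have key : norm2 y ^+ 2 <= norm2 u * (specnorm W * norm2 y).
  rewrite norm2_sq.
  have -> : \sum_i y i 0 ^+ 2 = \sum_k u k 0 * (W *m y) k 0.
    have -> : \sum_i y i 0 ^+ 2 = \sum_i \sum_k y i 0 * (W k i * u k 0).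
      apply: eq_bigr => i _; rewrite expr2 {2}/y mxE mulr_sumr.
      by apply: eq_bigr => k _; rewrite mxE.
    rewrite exchange_big /=; apply: eq_bigr => k _; rewrite mxE mulr_sumr.
    by apply: eq_bigr => i _; ring.
  apply: (lerT (cs_sqrt _ (fun k => u k 0) (fun k => (W *m y) k 0))).
  by apply: ler_wpM2l; [exact: norm2_ge0 | exact: specnorm_le].
have [y0|yn0] := eqVneq (norm2 y) 0.
  by rewrite y0; apply: mulr_ge0 => //; exact: norm2_ge0.
have yp : 0 < norm2 y by rewrite lt_neqAle eq_sym yn0 norm2_ge0.
rewrite -(ler_pM2l yp); apply: (lerT _ (lerT key _)).
  by rewrite expr2.
by rewrite le_eqVlt; apply/orP; left; apply/eqP; ring.
Qed.

Lemma frob_mul_le a b c (G : 'M[R]_(a, b)) (W : 'M[R]_(b, c)) :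
  frob (G *m W) <= frob G * specnorm W.
Proof.
have s0 := specnorm_ge0 W.
rewrite /frob -(ger0_norm s0) -sqrtr_sqr -sqrtrM; last first.
  by apply: sumr_ge0 => i _; apply: sumr_ge0 => j _; exact: sqr_ge0.
rewrite ler_sqrt; last first.
  apply: mulr_ge0; last exact: sqr_ge0.
  by apply: sumr_ge0 => i _; apply: sumr_ge0 => j _; exact: sqr_ge0.
rewrite mulr_suml; apply: ler_sum => r _.
have e1 : \sum_j (G *m W) r j ^+ 2 = norm2 (W^T *m (row r G)^T) ^+ 2.
  rewrite norm2_sq; apply: eq_bigr => j _; congr (_ ^+ 2).
  rewrite !mxE; apply: eq_bigr => k _; rewrite !mxE; ring.
have e2 : \sum_j G r j ^+ 2 = norm2 ((row r G)^T) ^+ 2.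
  by rewrite norm2_sq; apply: eq_bigr => j _; rewrite !mxE.
rewrite e1 e2 -exprMn mulrC; apply: lerXn2r; rewrite ?nnegrE ?norm2_ge0 //.
  by apply: mulr_ge0 => //; exact: norm2_ge0.
exact: specnorm_tr_le.
Qed.

End Spec.

Section Calc.
Local Open Scope classical_set_scope.
Set Implicit Arguments.
Context {R : realType}.

Lemma isd_entry m q (g : R -> 'M[R]_(m, q)) t a b :
  derivable g t 1 -> is_derive t (1 : R) (fun s => g s a b) ((derive1 g t) a b).
Proof.
move=> dg; apply: DeriveDef; first exact: ((derivable_mxP g t 1).1 dg a b).
by rewrite derive1E derive_mx // mxE.
Qed.

Lemma isd_sq (f : R -> R) t df a y : is_derive t (1 : R) f df ->
  is_derive t (1 : R) (fun s => a * (f s - y) ^+ 2) (a * (2 * (f t - y) * df)).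
Proof.
move=> H.
have H1 : is_derive t (1 : R) (f - cst y) (df - 0) by apply: is_deriveB.
have H2 := is_deriveX 2 H1.
have H3 := is_deriveZ a H2.
have -> : (fun s => a * (f s - y) ^+ 2) = a \*: (f - cst y) ^+ 2.
  by apply/funext => s; rewrite /= exprfctE.
apply: (is_derive_eq H3).
change (a * ((2 * (f t - y) ^+ 1) * (df - 0)) = a * (2 * (f t - y) * df)).
rewrite expr1 subr0; ring.
Qed.

Lemma isd_mul (f h : R -> R) t df dh a y :
  is_derive t (1 : R) f df -> is_derive t (1 : R) h dh ->
  is_derive t (1 : R) (fun s => a * (2 * (f s - y) * h s))
     (a * (2 * (df * h t + (f t - y) * dh))).
Proof.
move=> Hf Hh.
have H1 : is_derive t (1 : R) (f - cst y) (df - 0) by apply: is_deriveB.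
have H2 := is_deriveM H1 Hh.
have H3 := is_deriveZ (a * 2) H2.
have -> : (fun s => a * (2 * (f s - y) * h s)) = (a * 2) \*: ((f - cst y) * h).
  by apply/funext => s; change (a * (2 * (f s - y) * h s) = (a * 2) * ((f s - y) * h s)); ring.
apply: (is_derive_eq H3).
change ((a * 2) * ((f t - y) * dh + h t * (df - 0)) = a * (2 * (df * h t + (f t - y) * dh))).
rewrite subr0; ring.
Qed.

Lemma isd_sum n (h : 'I_n -> R -> R) t dh :
  (forall i, is_derive t (1 : R) (h i) (dh i)) ->
  is_derive t (1 : R) (fun s => \sum_i h i s) (\sum_i dh i).
Proof. by move=> H; rewrite -fct_sumE; exact: is_derive_sum. Qed.


Lemma d2_sqloss N n (g : 'I_n -> R -> 'cV[R]_N) (Y : 'I_n -> 'cV[R]_N) :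
  (forall i t, derivable (g i) t 1) -> (forall i, derivable (derive1 (g i)) 0 1) ->
  (forall i, g i 0 = Y i) ->
  d2 (fun t => n%:R^-1 * \sum_i 2^-1 * sqnorm2 (g i t - Y i)) 0 =
  n%:R^-1 * \sum_i sqnorm2 (derive1 (g i) 0).
Proof.
move=> dg dg' gY.
pose a : R := n%:R^-1 * 2^-1.
have eL : (fun t => n%:R^-1 * \sum_i 2^-1 * sqnorm2 (g i t - Y i)) =
          (fun t => \sum_i \sum_k a * (g i t k 0 - Y i k 0) ^+ 2).
  apply/funext => t; rewrite mulr_sumr; apply: eq_bigr => i _.
  rewrite /sqnorm2 mulrA mulr_sumr; apply: eq_bigr => k _; rewrite !mxE.
  by rewrite /a.
have D1 : forall t, is_derive t (1 : R) (fun t => \sum_i \sum_k a * (g i t k 0 - Y i k 0) ^+ 2)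
   (\sum_i \sum_k a * (2 * (g i t k 0 - Y i k 0) * (derive1 (g i) t) k 0)).
  move=> t; apply: isd_sum => i; apply: isd_sum => k; apply: isd_sq.
  exact: isd_entry.
have eD : derive1 (fun t => \sum_i \sum_k a * (g i t k 0 - Y i k 0) ^+ 2) =
  (fun t => \sum_i \sum_k a * (2 * (g i t k 0 - Y i k 0) * (derive1 (g i) t) k 0)).
  by apply/funext => t; rewrite derive1E derive_val.
have D2 : is_derive (0 : R) (1 : R)
  (fun t => \sum_i \sum_k a * (2 * (g i t k 0 - Y i k 0) * (derive1 (g i) t) k 0))
  (\sum_i \sum_k a * (2 * ((derive1 (g i) 0) k 0 * (derive1 (g i) 0) k 0
        + (g i 0 k 0 - Y i k 0) * (derive1 (derive1 (g i)) 0) k 0))).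
  apply: isd_sum => i; apply: isd_sum => k; apply: isd_mul.
    exact: isd_entry.
  exact: isd_entry.
rewrite /d2 eL eD derive1E derive_val mulr_sumr; apply: eq_bigr => i _.
rewrite /sqnorm2 mulr_sumr; apply: eq_bigr => k _.
rewrite gY subrr mul0r addr0 /a -mulrA; congr (_ * _); field => //.
Qed.

Lemma derive1_line m q (h : 'cV[R]_m -> 'cV[R]_q) z v :
  differentiable h z -> derive1 (fun s => h (z + s *: v)) 0 = 'd h z v.
Proof.
move=> dh; rewrite derive1E -deriveE //; rewrite /derive.
have -> : (fun t : R => t^-1 *: (((fun s => h (z + s *: v)) \o shift 0) (t *: 1) - (fun s => h (z + s *: v)) 0))
  = (fun t : R => t^-1 *: ((h \o shift z) (t *: v) - h z)).
  apply/funext => t /=; rewrite scale0r !addr0 [t%:A]mulr1 [z + _]addrC.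
  done.
by [].
Qed.

End Calc.

Section Had.
Lemma sqsum_mul_tr (R : comPzRingType) m (u v : 'rV[R]_m) :
  (u *m v^T) 0 0 = \sum_j u 0 j * v 0 j.
Proof. by rewrite mxE; apply: eq_bigr => j _; rewrite mxE. Qed.

Lemma gram_hadamard (R : realType) N m (A : 'M[R]_(N, m)) :
  0 <= \det (A *m A^T) /\ \det (A *m A^T) <= \prod_(k < N) \sum_(j < m) A k j ^+ 2.
Proof.
elim: N A => [|N IH] A.
  by rewrite det_mx00 big_ord0 ler01 lexx.
have := vsubmxK (A : 'M[R]_(1 + N, m)); move: (usubmx _) (dsubmx _) => a A' <-.
have Eprod : \prod_(k < N.+1) \sum_j (col_mx a A' : 'M[R]_(1 + N, m)) k j ^+ 2
   = (\sum_j a 0 j ^+ 2) * (\prod_(k < N) \sum_j A' k j ^+ 2).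
  have e1 : \sum_j (col_mx a A' : 'M[R]_(1 + N, m)) ord0 j ^+ 2 = \sum_j a 0 j ^+ 2.
    apply: eq_bigr => j _.
    have -> : (ord0 : 'I_N.+1) = lshift N (ord0 : 'I_1) by apply: val_inj.
    by rewrite col_mxEu.
  have e2 : forall k, \sum_j (col_mx a A' : 'M[R]_(1 + N, m)) (lift ord0 k) j ^+ 2 = \sum_j A' k j ^+ 2.
    move=> k; apply: eq_bigr => j _.
    have -> : lift ord0 k = rshift 1 k by apply: val_inj.
    by rewrite col_mxEd.
  by rewrite big_ord_recl e1 (eq_bigr _ (fun k _ => e2 k)).
rewrite Eprod.
have [IH0 IH1] := IH A'.
have sq0 : forall k (u : 'rV[R]_k), 0 <= \sum_j u 0 j ^+ 2.
  by move=> k u; apply: sumr_ge0 => j _; exact: sqr_ge0.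
have [G0|Gn0] := eqVneq (\det (A' *m A'^T)) 0.
  move/eqP/det0P: G0 => [v vn0 vG].
  have vA : v *m A' = 0.
    have H : ((v *m A') *m (v *m A')^T) 0 0 = 0.
      by rewrite trmx_mul mulmxA -(mulmxA v) vG mul0mx mxE.
    rewrite sqsum_mul_tr in H.
    apply/rowP => j; rewrite [RHS]mxE.
    have H2 : forall j, (v *m A') 0 j ^+ 2 = 0.
      move=> j0; have S0 : \sum_i (v *m A') 0 i ^+ 2 = 0.
        by rewrite -[RHS]H; apply: eq_bigr => i _; rewrite expr2.
      exact: (psumr_eq0P (fun i _ => sqr_ge0 ((v *m A') 0 i)) S0).
    by move/eqP: (H2 j); rewrite sqrf_eq0 => /eqP.
  have -> : \det (col_mx a A' *m (col_mx a A')^T) = 0.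
    apply/eqP/det0P; exists (row_mx 0 v).
      by rewrite row_mx_eq0 negb_and vn0 orbT.
    by rewrite mulmxA mul_row_col mul0mx add0r vA mul0mx.
  split => //; apply: mulr_ge0; first exact: sq0.
  by apply: prodr_ge0 => k _; apply: sumr_ge0 => j _; exact: sqr_ge0.
have Gu : A' *m A'^T \in unitmx by rewrite unitmxE unitfE.
pose c := a *m A'^T *m invmx (A' *m A'^T).
pose P := a - c *m A'.
have PA : P *m A'^T = 0.
  by rewrite /P mulmxBl -mulmxA /c mulmxKV // subrr.
have AP : A' *m P^T = 0 by rewrite -[A' *m P^T]trmxK trmx_mul trmxK PA trmx0.
pose E : 'M[R]_(1 + N) := block_mx 1%:M (-c) 0 1%:M.
have EM : E *m col_mx a A' = col_mx P A'.
  by rewrite mul_block_col !mul1mx mul0mx add0r mulNmx.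
have dE : \det E = 1 by rewrite det_ublock !det1 mulr1.
have Edet : \det (col_mx a A' *m (col_mx a A')^T) = \det (col_mx P A' *m (col_mx P A')^T).
  have -> : col_mx P A' *m (col_mx P A')^T = E *m (col_mx a A' *m (col_mx a A')^T) *m E^T.
    by rewrite -EM trmx_mul !mulmxA.
  by rewrite !det_mulmx det_tr dE mul1r mulr1.
rewrite Edet tr_col_mx mul_col_row PA AP det_ublock det_mx11 sqsum_mul_tr.
pose q := c *m A'.
have Pq : \sum_j P 0 j * q 0 j = 0.
  by rewrite -sqsum_mul_tr /q trmx_mul mulmxA PA mul0mx mxE.
have aPq : a = P + q by rewrite /P /q subrK.
have Hle : \sum_j P 0 j * P 0 j <= \sum_j a 0 j ^+ 2.
  rewrite aPq.
  have -> : \sum_j (P + q) 0 j ^+ 2 = \sum_j P 0 j * P 0 j + \sum_j q 0 j ^+ 2 + (\sum_j P 0 j * q 0 j) *+ 2.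
    rewrite -sumrMnl -!big_split /=; apply: eq_bigr => j _; rewrite mxE; ring.
  rewrite Pq mul0rn addr0 lerDl; exact: sq0.
have PP0 : 0 <= \sum_j P 0 j * P 0 j.
  by apply: sumr_ge0 => j _; rewrite -expr2; exact: sqr_ge0.
split; first exact: mulr_ge0.
by apply: ler_pM.
Qed.

Lemma vol_bound (R : realType) q N m (A : 'M[R]_(q, m)) : q = N ->
  Num.sqrt (\det (A *m A^T)) <= N%:R `^ (- (N%:R / 2)) * frob A ^+ N.
Proof.
move=> <-{N}.
set T := \sum_(k < q) \sum_(j < m) A k j ^+ 2.
have T0 : 0 <= T by apply: sumr_ge0 => k _; apply: sumr_ge0 => j _; exact: sqr_ge0.
have [D0 D1] := @gram_hadamard R q m A.
have amgm : \prod_(k < q) \sum_(j < m) A k j ^+ 2 <= (T / q%:R) ^+ q.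
  have := @leif_AGM R _ predT (fun k : 'I_q => \sum_(j < m) A k j ^+ 2).
  move=> /(_ (fun k _ => sumr_ge0 _ (fun j _ => sqr_ge0 (A k j)))) [+ _].
  by rewrite card_ord.
have R0 : 0 <= q%:R `^ (- (q%:R / 2)) * frob A ^+ q.
  by apply: mulr_ge0; [exact: powR_ge0 | apply: exprn_ge0; exact: sqrtr_ge0].
rewrite -[X in _ <= X](ger0_norm R0) -sqrtr_sqr ler_sqrt ?sqr_ge0 //.
rewrite exprMn -exprM mulnC exprM sqr_sqrtr // -powR_mulrn ?powR_ge0 // -powRrM.
have -> : (- (q%:R / 2) * 2%:R) = - (q%:R : R) by field.
rewrite powR_invn ?ler0n //.
apply: (le_trans D1); apply: (le_trans amgm).
by rewrite expr_div_n mulrC.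
Qed.

End Had.

Section Final.
Set Implicit Arguments.
Context {R : realType}.

Lemma sum_pow_le (I : finType) (a : I -> R) N :
  (forall i, 0 <= a i) -> \sum_i a i ^+ N.+1 <= (\sum_i a i) ^+ N.+1.
Proof.
move=> a0; rewrite exprS mulr_suml; apply: ler_sum => i _.
rewrite exprS; apply: ler_wpM2l => //; apply: lerXn2r.
- by rewrite nnegrE a0.
- by rewrite nnegrE; apply: sumr_ge0.
by rewrite (bigD1 i) //= lerDl; apply: sumr_ge0.
Qed.

Lemma powR_half (x : R) N : 0 <= x -> x `^ (N%:R / 2) = Num.sqrt x ^+ N.
Proof.
move=> x0; rewrite mulrC powRrM powR12_sqrt // powR_mulrn //; exact: sqrtr_ge0.
Qed.

Lemma sqrtX (x : R) N : 0 <= x -> Num.sqrt (x ^+ N) = Num.sqrt x ^+ N.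
Proof.
move=> x0; rewrite -[x in LHS](sqr_sqrtr x0) exprAC sqrtr_sqr ger0_norm // exprn_ge0 // sqrtr_ge0.
Qed.

Lemma le_sq_ge0 (x y : R) : 0 <= y -> x ^+ 2 <= y ^+ 2 -> x <= y.
Proof.
move=> y0 H; apply: (le_trans (ler_norm x)); rewrite -sqrtr_sqr -[y]ger0_norm // -sqrtr_sqr.
by rewrite ler_sqrt // ?sqr_ge0.
Qed.

Lemma final_ineq (L n N : nat) (F a xn : 'I_L -> 'I_n -> R) (s : 'I_L -> R) (S : R) :
  (0 < n)%N -> (0 < N)%N ->
  (forall l i, 0 <= F l i) -> (forall l i, 0 <= a l i) -> (forall l i, 0 < xn l i) ->
  (forall l, 0 <= s l) ->
  (forall l i, F l i ^+ 2 * xn l i ^+ 2 <= s l ^+ 2 * a l i) ->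
  \sum_l \sum_i a l i <= n%:R * S ->
  N%:R `^ (- (N%:R / 2)) / n%:R * \sum_l \sum_i F l i ^+ N
  <= n%:R^-1 * Num.sqrt (\sum_l \sum_i s l ^+ (2 * N) / xn l i ^+ (2 * N)) *
     (n%:R * S / N%:R) `^ (N%:R / 2).
Proof.
move=> n0 N0 F0 a0 xn0 s0 HF Ha.
pose c l i := s l / xn l i.
have c0 : forall l i, 0 <= c l i.
  by move=> l i; apply: divr_ge0 => //; exact: ltW.
have Fle : forall l i, F l i <= c l i * Num.sqrt (a l i).
  move=> l i; apply: le_sq_ge0; first by apply: mulr_ge0 => //; exact: sqrtr_ge0.
  rewrite exprMn sqr_sqrtr // /c expr_div_n.
  have xp : 0 < xn l i ^+ 2 by apply: exprn_gt0.
  by rewrite mulrAC ler_pdivlMr // mulrC.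
have FN : \sum_l \sum_i F l i ^+ N <= \sum_l \sum_i c l i ^+ N * Num.sqrt (a l i) ^+ N.
  apply: ler_sum => l _; apply: ler_sum => i _; rewrite -exprMn; apply: lerXn2r.
  - by rewrite nnegrE.
  - by rewrite nnegrE; apply: mulr_ge0 => //; exact: sqrtr_ge0.
  exact: Fle.
have SA : 0 <= \sum_l \sum_i a l i by apply: sumr_ge0 => l _; apply: sumr_ge0.
have S0 : 0 <= n%:R * S by exact: le_trans Ha.
have CS : \sum_l \sum_i c l i ^+ N * Num.sqrt (a l i) ^+ N <=
  Num.sqrt (\sum_l \sum_i s l ^+ (2 * N) / xn l i ^+ (2 * N)) * Num.sqrt (n%:R * S) ^+ N.
  rewrite pair_bigA /=.
  apply: (le_trans (cs_sqrt _ (fun p : 'I_L * 'I_n => c p.1 p.2 ^+ N) (fun p => Num.sqrt (a p.1 p.2) ^+ N))).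
  apply: ler_pM; try exact: sqrtr_ge0.
    rewrite pair_bigA /= le_eqVlt; apply/orP; left; apply/eqP; congr Num.sqrt.
    by apply: eq_bigr => -[l i] _ /=; rewrite -exprM mulnC /c expr_div_n.
  rewrite -sqrtX // ler_sqrt; last by apply: exprn_ge0.
  have -> : \sum_p (Num.sqrt (a p.1 p.2) ^+ N) ^+ 2 = \sum_p a p.1 p.2 ^+ N.
    by apply: eq_bigr => p _; rewrite -exprM mulnC exprM sqr_sqrtr.
  case: N N0 {FN c0 Fle} => // N _.
  have ap : forall p : 'I_L * 'I_n, 0 <= a p.1 p.2 by move=> p; apply: a0.
  apply: (le_trans (sum_pow_le _ _ N ap)).
  apply: lerXn2r; rewrite ?nnegrE //.
    by rewrite -pair_bigA.
  by rewrite -pair_bigA.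
have Np : 0 < N%:R :> R by rewrite ltr0n.
rewrite powRN powR_half ?ler0n // powR_half; last by apply: divr_ge0 => //; exact: ler0n.
rewrite sqrtrM // sqrtrV ?ler0n // exprMn exprVn.
set K := Num.sqrt (\sum_l \sum_i s l ^+ (2 * N) / xn l i ^+ (2 * N)).
have sNp : 0 < Num.sqrt (N%:R : R) ^+ N by apply: exprn_gt0; rewrite sqrtr_gt0.
have A0 : 0 <= Num.sqrt (N%:R : R) ^- N / n%:R.
  by apply: divr_ge0; [rewrite invr_ge0; exact: ltW | exact: ler0n].
apply: (le_trans (ler_wpM2l A0 (le_trans FN CS))).
rewrite le_eqVlt; apply/orP; left; apply/eqP; rewrite /K; field.
by rewrite gt_eqF // pnatr_eq0 -lt0n n0.
Qed.

End Final.

Unset Implicit Arguments.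
Section NetLemmas.
Context {R : realType} (d e p : nat -> nat)
  (sigma : forall l, 'cV[R]_(e l) -> 'cV[R]_(p l) -> 'cV[R]_(d l.+1)).

Fixpoint Tl (W : forall l, 'M[R]_(e l, d l)) (B : forall l, 'cV[R]_(p l)) (k l : nat) :
  'cV[R]_(d l.+1) -> 'cV[R]_(d (k.+1 + l)) :=
  match k return 'cV[R]_(d l.+1) -> 'cV[R]_(d (k.+1 + l)) with
  | 0 => fun u => u
  | k'.+1 => fun u => layer d e p sigma W B (k'.+1 + l) (Tl W B k' l u)
  end.

Set Implicit Arguments.

Lemma fwd_run W B k l x :
  fwd d e p sigma W B (k + l) x = run d e p sigma W B k l (fwd d e p sigma W B l x).
Proof. by elim: k => [//|k IH]; rewrite [LHS]/= IH. Qed.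

Lemma run_T W B k l x :
  run d e p sigma W B k.+1 l x = Tl W B k l (layer d e p sigma W B l x).
Proof.
elim: k => [//|k IH].
by change (layer d e p sigma W B (k.+1 + l) (run d e p sigma W B k.+1 l x) =
  layer d e p sigma W B (k.+1 + l) (Tl W B k l (layer d e p sigma W B l x))); rewrite IH.
Qed.

Lemma T_ext W1 W2 B k l u : (forall l', (l < l')%N -> W1 l' = W2 l') ->
  Tl W1 B k l u = Tl W2 B k l u.
Proof.
move=> H; elim: k => [//|k IH] /=; rewrite IH /layer H //.
by rewrite addSn ltnS leq_addl.
Qed.

Lemma fwd_ext W1 W2 B l x : (forall l', (l' < l)%N -> W1 l' = W2 l') ->
  fwd d e p sigma W1 B l x = fwd d e p sigma W2 B l x.
Proof.
elim: l => [//|l IH] H /=; rewrite IH; last by move=> l' lt; apply: H; exact: ltnW.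
by rewrite /layer H.
Qed.

Lemma Wpert_neq (W : forall l, 'M[R]_(e l, d l)) l0 i0 j0 s l : l != l0 -> Wpert d e W l0 i0 j0 s l = W l.
Proof. by move=> /negbTE H; apply/matrixP => i j; rewrite mxE H /= addr0. Qed.

Lemma Wpert_eq (W : forall l, 'M[R]_(e l, d l)) l (i0 : 'I_(e l)) (j0 : 'I_(d l)) s :
  Wpert d e W l i0 j0 s l = W l + s *: delta_mx i0 j0.
Proof.
apply/matrixP => i j; rewrite !mxE eqxx /= !val_eqE.
by case: (i == i0); case: (j == j0); rewrite /= ?mulr1 ?mulr0.
Qed.


Lemma mulmx_sumE a b (M : 'M[R]_(a, b)) (u : 'cV[R]_b) : M *m u = \sum_k u k 0 *: col k M.
Proof.
apply/matrixP => i j; rewrite ord1 mxE summxE; apply: eq_bigr => k _.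
by rewrite !mxE mulrC.
Qed.

Lemma mulmx_diffble a b (M : 'M[R]_(a, b)) x : differentiable (fun u : 'cV[R]_b => M *m u) x.
Proof.
have -> : (fun u : 'cV[R]_b => M *m u) = \sum_k (fun u : 'cV[R]_b => u k 0 *: col k M).
  by rewrite fct_sumE; apply/funext => u; exact: mulmx_sumE.
apply: differentiable_sum => k; apply: differentiableZl; exact: differentiable_coord.
Qed.

Lemma mulmx_cont a b (M : 'M[R]_(a, b)) : continuous (fun u : 'cV[R]_b => M *m u).
Proof. by move=> x; apply: differentiable_continuous; exact: mulmx_diffble. Qed.

Lemma diff_mulmx a b (M : 'M[R]_(a, b)) x :
  'd (fun u : 'cV[R]_b => M *m u) x = (fun u => M *m u) :> (_ -> _).
Proof. by rewrite (@diff_lin _ _ _ (mulmx M)) //; exact: mulmx_cont. Qed.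

Lemma lin_col b q (f : {linear 'cV[R]_b -> 'cV[R]_q}) v :
  f v = \sum_k v k 0 *: f (delta_mx k 0).
Proof.
rewrite {1}(matrix_sum_delta v) linear_sum; apply: eq_bigr => k _.
by rewrite big_ord1 linearZ.
Qed.

Lemma mul_delta_col a b (M : 'M[R]_(a, b)) j k : (M *m delta_mx j (0 : 'I_1)) k 0 = M k j.
Proof.
rewrite mxE (bigD1 j) //= big1 ?addr0; first by rewrite mxE !eqxx mulr1.
by move=> t tj; rewrite mxE (negbTE tj) mulr0.
Qed.

Lemma delta_mul_col a b (i0 : 'I_a) (j0 : 'I_b) (x : 'cV[R]_b) :
  delta_mx i0 j0 *m x = x j0 0 *: delta_mx i0 0.
Proof.
apply/matrixP => i j; rewrite ord1 !mxE (bigD1 j0) //= big1 ?addr0.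
  by rewrite !mxE !eqxx andbT mulrC.
by move=> t tj; rewrite mxE (negbTE tj) andbF mul0r.
Qed.

Lemma jac_comp a b q (h : 'cV[R]_a -> 'cV[R]_q) (M : 'M[R]_(a, b)) x :
  differentiable h (M *m x) -> jac (fun y => h (M *m y)) x = jac h (M *m x) *m M.
Proof.
move=> dh.
have E : 'd (fun y => h (M *m y)) x = 'd h (M *m x) \o (fun y => M *m y) :> (_ -> _).
  rewrite (_ : (fun y => h (M *m y)) = h \o (fun y => M *m y)) //.
  by rewrite diff_comp ?diff_mulmx //; exact: mulmx_diffble.
apply/matrixP => i j; rewrite !mxE E /= lin_col summxE; apply: eq_bigr => k _.
by rewrite mul_delta_col [LHS]mxE [jac _ _ _ _]mxE mulrC.
Qed.

Section WithSigma.
Hypothesis Hs : forall l (b : 'cV[R]_(p l)) (z : 'cV[R]_(e l)),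
  differentiable (fun u => sigma l u b) z.

Lemma layer_diffble W B l x : differentiable (layer d e p sigma W B l) x.
Proof.
have -> : layer d e p sigma W B l = (fun u => sigma l u (B l)) \o (fun x => W l *m x) by [].
apply: differentiable_comp; [exact: mulmx_diffble | exact: Hs].
Qed.

Lemma T_diffble W B k l u : differentiable (Tl W B k l) u.
Proof.
elim: k u => [|k IH] u /=.
  have -> : (fun u : 'cV[R]_(d l.+1) => u) = (fun u => 1%:M *m u).
    by apply/funext => v; rewrite mul1mx.
  exact: mulmx_diffble.
have -> : (fun u => layer d e p sigma W B (k.+1 + l) (Tl W B k l u)) =
  layer d e p sigma W B (k.+1 + l) \o Tl W B k l by [].
apply: differentiable_comp; [exact: IH | exact: layer_diffble].
Qed.


Lemma net_pert W B k l (i0 : 'I_(e l)) (j0 : 'I_(d l)) x s :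
  fwd d e p sigma (Wpert d e W l i0 j0 s) B (k.+1 + l) x =
  Tl W B k l (sigma l (W l *m fwd d e p sigma W B l x +
     s *: (fwd d e p sigma W B l x j0 0 *: delta_mx i0 0)) (B l)).
Proof.
rewrite fwd_run run_T (T_ext _ W); last first.
  by move=> l' ll; apply: Wpert_neq; rewrite gtn_eqF.
rewrite (fwd_ext _ W); last by move=> l' ll; apply: Wpert_neq; rewrite ltn_eqF.
by rewrite /layer Wpert_eq mulmxDl -scalemxAl delta_mul_col.
Qed.

Lemma key_ineq W B L l x : (l < L)%N ->
  frob (jac (fl d e p sigma W B L l) (fwd d e p sigma W B l x)) ^+ 2 *
    norm2 (fwd d e p sigma W B l x) ^+ 2 <=
  specnorm (W l) ^+ 2 * \sum_(i0 < e l) \sum_(j0 < d l)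
     sqnorm2 (derive1 (fun s => net d e p sigma (Wpert d e W l i0 j0 s) B L x) 0).
Proof.
move=> lL.
have [k ->] : exists k, L = k.+1 + l.
  by exists (L - l).-1; lia.
rewrite /fl /net addnK.
set xl := fwd d e p sigma W B l x.
pose h := fun u => Tl W B k l (sigma l u (B l)).
have dh : forall z, differentiable h z.
  by move=> z; apply: differentiable_comp; [exact: Hs | exact: T_diffble].
have Erun : run d e p sigma W B k.+1 l = (fun y => h (W l *m y)).
  by apply/funext => y; rewrite run_T.
rewrite Erun jac_comp //.
set z := W l *m xl.
have Eder : forall (i0 : 'I_(e l)) (j0 : 'I_(d l)),
  derive1 (fun s => fwd d e p sigma (Wpert d e W l i0 j0 s) B (k.+1 + l) x) 0 =
  xl j0 0 *: 'd h z (delta_mx i0 0).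
  move=> i0 j0.
  rewrite (_ : (fun s => _) = (fun s => h (z + s *: (xl j0 0 *: delta_mx i0 0)))); last first.
    by apply/funext => s; rewrite net_pert.
  by rewrite derive1_line // linearZ.
have eR : \sum_(i0 < e l) \sum_(j0 < d l)
     sqnorm2 (derive1 (fun s => fwd d e p sigma (Wpert d e W l i0 j0 s) B (k.+1 + l) x) 0)
   = norm2 xl ^+ 2 * frob (jac h z) ^+ 2.
  rewrite norm2_sq /frob sqr_sqrtr; last first.
    by apply: sumr_ge0 => i _; apply: sumr_ge0 => j _; exact: sqr_ge0.
  rewrite [X in _ * X]exchange_big /= mulr_sumr; apply: eq_bigr => c _.
  rewrite mulr_suml; apply: eq_bigr => j0 _; rewrite Eder /sqnorm2 mulr_sumr.
  by apply: eq_bigr => r _; rewrite !mxE exprMn.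
rewrite eR.
have s0 := specnorm_ge0 (W l).
have Hf := frob_mul_le (jac h z) (W l).
have Hf2 : frob (jac h z *m W l) ^+ 2 <= (frob (jac h z) * specnorm (W l)) ^+ 2.
  apply: lerXn2r; rewrite ?nnegrE //; first exact: sqrtr_ge0.
  by apply: mulr_ge0 => //; exact: sqrtr_ge0.
apply: (le_trans (ler_wpM2r (sqr_ge0 (norm2 xl)) Hf2)).
by rewrite le_eqVlt; apply/orP; left; apply/eqP; ring.
Qed.

End WithSigma.

End NetLemmas.

Unset Implicit Arguments.

Theorem proposition2 (R : realType) (L n : nat) (d e p : nat -> nat)
  (sigma : forall l, 'cV[R]_(e l) -> 'cV[R]_(p l) -> 'cV[R]_(d l.+1))
  (X : 'I_n -> 'cV[R]_(d 0)) (Y : 'I_n -> 'cV[R]_(d L))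
  (W : forall l, 'M[R]_(e l, d l)) (B : forall l, 'cV[R]_(p l)) :
  (1 <= d L)%N -> (0 < n)%N ->
  (* each sigma_l is differentiable in its input *)
  (forall l (b : 'cV[R]_(p l)) (z : 'cV[R]_(e l)),
      differentiable (fun u => sigma l u b) z) ->
  (* f is twice differentiable in theta (along every coordinate line) *)
  (forall (i : 'I_n) (l i0 j0 : nat) (t : R),
      derivable (fun s => net d e p sigma (Wpert d e W l i0 j0 s) B L (X i)) t 1 /\
      derivable (derive1 (fun s => net d e p sigma (Wpert d e W l i0 j0 s) B L (X i))) t 1) ->
  (forall (i : 'I_n) (l k0 : nat) (t : R),
      derivable (fun s => net d e p sigma W (Bpert p B l k0 s) L (X i)) t 1 /\
      derivable (derive1 (fun s => net d e p sigma W (Bpert p B l k0 s) L (X i))) t 1) ->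
  (* all inputs of the linear layers are nonzero *)
  (forall (l : 'I_L) (i : 'I_n), fwd d e p sigma W B l (X i) != 0) ->
  (* exact interpolation *)
  (forall i : 'I_n, net d e p sigma W B L (X i) = Y i) ->
  let N := d L in
  let S := sharpness d e p sigma L n X Y W B in
  let xl := fun (l : 'I_L) (i : 'I_n) => fwd d e p sigma W B l (X i) in
  let Jl := fun (l : 'I_L) (i : 'I_n) =>
              jac (fl d e p sigma W B L l) (xl l i) in
  \sum_(l < L) (n%:R^-1 * \sum_(i < n) volratio (fl d e p sigma W B L l) (xl l i))
    <= (N%:R `^ (- (N%:R / 2))) / n%:R *
       \sum_(l < L) \sum_(i < n) frob (Jl l i) ^+ N
  /\
  (N%:R `^ (- (N%:R / 2))) / n%:R *
       \sum_(l < L) \sum_(i < n) frob (Jl l i) ^+ N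
    <= n%:R^-1 *
       Num.sqrt (\sum_(l < L) \sum_(i < n)
                   specnorm (W l) ^+ (2 * N) / norm2 (xl l i) ^+ (2 * N)) *
       (n%:R * S / N%:R) `^ (N%:R / 2).
Proof.
move=> dL n0 Hs HW HB Hx Hint N S xl Jl.
have np : (0 : R) < n%:R by rewrite ltr0n.
split.
  rewrite mulr_sumr; apply: ler_sum => l _.
  rewrite mulr_sumr [X in _ <= X]mulr_sumr; apply: ler_sum => i _.
  have HV := @vol_bound R (d (L - l + l)%N) (d L) (d l) (Jl l i) (congr1 d (subnK (ltnW (ltn_ord l)))).
  have n1 : (0 : R) <= n%:R^-1 by rewrite invr_ge0 ltW.
  apply: (le_trans (ler_wpM2l n1 HV)).
  by rewrite le_eqVlt; apply/orP; left; apply/eqP; rewrite /N; ring.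
pose a := fun (l : 'I_L) (i : 'I_n) => \sum_(i0 < e l) \sum_(j0 < d l)
  sqnorm2 (derive1 (fun s => net d e p sigma (Wpert d e W l i0 j0 s) B L (X i)) 0).
have W0 : forall l i0 j0, Wpert d e W l i0 j0 0 = W.
  move=> l i0 j0; apply: functional_extensionality_dep => l'.
  by apply/matrixP => a' b'; rewrite /Wpert /Bpert mxE; case: ifP => _; rewrite addr0.
have B0 : forall l k0, Bpert p B l k0 0 = B.
  move=> l k0; apply: functional_extensionality_dep => l'.
  by apply/matrixP => a' b'; rewrite /Bpert mxE ord1; case: ifP => _; rewrite addr0.
have eW : forall (l : 'I_L) (i0 : 'I_(e l)) (j0 : 'I_(d l)),
  d2 (fun t => loss d e p sigma L n X Y (Wpert d e W l i0 j0 t) B) 0 =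
  n%:R^-1 * \sum_i sqnorm2 (derive1 (fun s => net d e p sigma (Wpert d e W l i0 j0 s) B L (X i)) 0).
  move=> l i0 j0.
  have h1 : forall i t, derivable (fun s => net d e p sigma (Wpert d e W l i0 j0 s) B L (X i)) t 1.
    by move=> i t; case: (HW i l i0 j0 t).
  have h2 : forall i, derivable (derive1 (fun s => net d e p sigma (Wpert d e W l i0 j0 s) B L (X i))) 0 1.
    by move=> i; case: (HW i l i0 j0 0).
  have h3 : forall i, (fun s => net d e p sigma (Wpert d e W l i0 j0 s) B L (X i)) 0 = Y i.
    by move=> i; rewrite /= W0.
  exact: (d2_sqloss _ Y h1 h2 h3).
have eB : forall (l : 'I_L) (k0 : 'I_(p l)),
  0 <= d2 (fun t => loss d e p sigma L n X Y W (Bpert p B l k0 t)) 0.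
  move=> l k0.
  have h1 : forall i t, derivable (fun s => net d e p sigma W (Bpert p B l k0 s) L (X i)) t 1.
    by move=> i t; case: (HB i l k0 t).
  have h2 : forall i, derivable (derive1 (fun s => net d e p sigma W (Bpert p B l k0 s) L (X i))) 0 1.
    by move=> i; case: (HB i l k0 0).
  have h3 : forall i, (fun s => net d e p sigma W (Bpert p B l k0 s) L (X i)) 0 = Y i.
    by move=> i; rewrite /= B0.
  have -> : d2 (fun t => loss d e p sigma L n X Y W (Bpert p B l k0 t)) 0 =
    n%:R^-1 * \sum_i sqnorm2 (derive1 (fun s => net d e p sigma W (Bpert p B l k0 s) L (X i)) 0).
    exact: (d2_sqloss _ Y h1 h2 h3).
  apply: mulr_ge0; first by rewrite invr_ge0 ltW.
  by apply: sumr_ge0 => i _; apply: sumr_ge0 => j _; exact: sqr_ge0.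
have Ha : \sum_l \sum_i a l i <= n%:R * S.
  rewrite /S /sharpness mulr_sumr; apply: ler_sum => l _.
  rewrite mulrDr; apply: ler_wpDr.
    apply: mulr_ge0; first exact: ltW.
    by apply: sumr_ge0 => k0 _; exact: eB.
  have -> : \sum_(i0 < e l) \sum_(j0 < d l)
      d2 (fun t => loss d e p sigma L n X Y (Wpert d e W l i0 j0 t) B) 0 =
    \sum_(i0 < e l) \sum_(j0 < d l) (n%:R^-1 * \sum_i
      sqnorm2 (derive1 (fun s => net d e p sigma (Wpert d e W l i0 j0 s) B L (X i)) 0)).
    by apply: eq_bigr => i0 _; apply: eq_bigr => j0 _; exact: eW.
  rewrite le_eqVlt; apply/orP; left; apply/eqP.
  rewrite /a exchange_big /= mulr_sumr; apply: eq_bigr => i0 _.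
  rewrite exchange_big /= mulr_sumr; apply: eq_bigr => j0 _.
  by rewrite mulVKf // pnatr_eq0 -lt0n.
have := @final_ineq R L n N (fun l i => frob (Jl l i)) a (fun l i => norm2 (xl l i))
  (fun l => specnorm (W l)) S n0 dL.
apply.
- by move=> l i; exact: sqrtr_ge0.
- by move=> l i; apply: sumr_ge0 => i0 _; apply: sumr_ge0 => j0 _; apply: sumr_ge0 => r _; exact: sqr_ge0.
- move=> l i; rewrite lt_neqAle norm2_ge0 andbT eq_sym.
  by apply/negP => /eqP /norm2_eq0 H; move/negP: (Hx l i); apply; apply/eqP; exact: H.
- by move=> l; exact: specnorm_ge0.
- move=> l i; exact: (key_ineq d e p sigma Hs W B L l (X i) (ltn_ord l)).
exact: Ha.
Qed.
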